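(* Let $n,m$ be positive integers. The expected number of fixed points of a permutation drawn from the lazy $m$-shelf shuffling distribution $x_m$ on $S_n$ equals $1+2\sum_{k=1}^{(n-1)/2}\frac{1}{(2m+1)^{2k}}$ if $n$ is odd, and $1+2\sum_{k=1}^{n/2-1}\frac{1}{(2m+1)^{2k}}+\frac{1}{(2m+1)^n}$ if $n$ is even.
   Context: $x_m$ is the lazy $m$-shelf shuffling distribution on $S_n$: a deck of cards $1,\ldots,n$ (top to bottom) is processed in order $1,\ldots,n$; each card independently and uniformly chooses one of $2m+1$ options: shelf $0$ (placed below the cards already there), or one of shelves $1,\ldots,m$, placed either on top of or below the cards already there. The piles are then stacked with shelf $0$ on top, then shelf $1$, ..., shelf $m$; $x_m(\pi)$ is the probability that the card in position $i$ from the top is $\pi(i)$ for all $i$. A fixed point of $\pi$ is an $i$ with $\pi(i)=i$. *)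

(* Defs.v *)
From mathcomp Require Import all_boot all_order all_algebra all_fingroup.
Set Implicit Arguments. Unset Strict Implicit. Unset Printing Implicit Defensive.
Import GRing.Theory Num.Theory.

(* Cards are 0-indexed: card i : 'I_n stands for card i+1; deck positions too.
   Option encoding for o : 'I_(2m+1):
     o = 0      : shelf 0, placed below the cards already there;
     o = 2j-1   : shelf j (1 <= j <= m), placed on top;
     o = 2j     : shelf j (1 <= j <= m), placed below.
   i.e. shelf = (o+1)/2, on top iff o is odd. *)

Definition shelf_of (k : nat) (o : 'I_k) : nat := (o.+1)./2.
Definition on_top (k : nat) (o : 'I_k) : bool := odd o.

Definition place (n k : nat) (o : 'I_k) (c : 'I_n) (piles : nat -> seq 'I_n)
  : nat -> seq 'I_n :=
  fun s => if s == shelf_of o then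
             (if on_top o then c :: piles s else rcons (piles s) c)
           else piles s.

(* Final deck (top to bottom) given the choices of all cards, processed in
   order 0, ..., n-1; piles stacked shelf 0 on top, then 1, ..., m. *)
Definition shelf_deck (n m : nat) (ch : {ffun 'I_n -> 'I_(2 * m + 1)}) : seq 'I_n :=
  let piles := foldl (fun p (i : 'I_n) => place (ch i) i p)
                     (fun _ => [::]) (enum 'I_n) in
  flatten [seq piles s | s <- iota 0 m.+1].

(* x_m(pi): probability that the card at position i is pi(i) for all i,
   when choices are independent and uniform over the 2m+1 options. *)
Definition lazy_shelf (n m : nat) (pi : 'S_n) : rat :=
  (#|[set ch : {ffun 'I_n -> 'I_(2 * m + 1)} |
       shelf_deck ch == [seq pi i | i <- enum 'I_n]]|)%:R
  / ((2 * m + 1) ^ n)%:R.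

Definition num_fixed_points (n : nat) (pi : 'S_n) : nat := #|[set i | pi i == i]|.

Definition expected_fixed_points (n m : nat) : rat :=
  \sum_(pi : 'S_n) lazy_shelf m pi * (num_fixed_points pi)%:R.

(* Main.v *)
Require Import Defs.
From mathcomp Require Import all_boot all_order all_algebra all_fingroup.
From mathcomp Require Import zify ring.
Import GRing.Theory Num.Theory.

Definition hE (o : nat) (w : seq nat) (t : nat) : int :=
  let a := count (fun x => o < x) (take t w) in
  let b := count (fun x => x < o) (drop t w) in (a%:Z - b%:Z)%R.

Lemma count_iotaS (P : pred nat) n :
  count P (iota 0 n.+1) = P 0 + count (fun t => P t.+1) (iota 0 n).
Proof.
have -> : iota 0 n.+1 = 0 :: map S (iota 0 n) by rewrite /= -[1]/(1+0) iotaDl.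
by rewrite /= count_map.
Qed.

Lemma count_take_drop (P : pred nat) w t :
  count P w = count P (take t w) + count P (drop t w).
Proof. by rewrite -count_cat cat_take_drop. Qed.

Lemma hE_mono o w t : (hE o w 0 <= hE o w t)%R.
Proof.
rewrite /hE take0 drop0 /=.
have := count_take_drop (fun x => x < o) w t.
set c1 := count _ w. set c2 := count _ (take _ _). set c3 := count _ (drop _ _). set c4 := count _ (take _ _). lia.
Qed.

Lemma hE_cons0 o x w : hE o (x :: w) 0 = (hE o w 0 - (x < o)%N%:Z)%R.
Proof. rewrite /hE /= ?take0 ?drop0 /=. set c := count _ w. lia. Qed.

Lemma hE_consS o x w t : hE o (x :: w) t.+1 = (hE o w t + (o < x)%N%:Z)%R.
Proof. rewrite /hE /=. set c1 := count _ (take _ _). set c2 := count _ (drop _ _). lia. Qed.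

Lemma hE_end o w : hE o w (size w) = Posz (count (fun x => o < x) w).
Proof. rewrite /hE take_size drop_size /=. set c := count _ _. lia. Qed.

Lemma PF : Posz (nat_of_bool false) = 0%R. Proof. by []. Qed.
Lemma PT : Posz (nat_of_bool true) = 1%R. Proof. by []. Qed.

Lemma even_walk o w (k : int) : (hE o w 0 <= k <= hE o w (size w))%R ->
  count (fun t => hE o w t == k) (iota 0 (size w).+1) =
  1 + count (fun c => (nth 0 w c == o) && (hE o w c == k)) (iota 0 (size w)).
Proof.
elim: w k => [|x w IH] k.
  rewrite /hE /= => /andP[h1 h2]. have -> : k = 0%R by lia. by [].
have L : count (fun t => hE o (x :: w) t == k) (iota 0 (size (x :: w)).+1) =
    (hE o (x :: w) 0 == k) + count (fun t => hE o w t == (k - (o < x)%N%:Z)%R) (iota 0 (size w).+1).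
  rewrite count_iotaS; congr (_ + _); apply: eq_count => t /=.
  by rewrite hE_consS; apply/eqP/eqP; lia.
have R : count (fun c => (nth 0 (x :: w) c == o) && (hE o (x :: w) c == k)) (iota 0 (size (x :: w))) =
    (x == o) && (hE o (x :: w) 0 == k) +
    count (fun c => (nth 0 w c == o) && (hE o w c == (k - (o < x)%N%:Z)%R)) (iota 0 (size w)).
  rewrite count_iotaS; congr (_ + _); apply: eq_count => t /=.
  by rewrite hE_consS; congr (_ && _); apply/eqP/eqP; lia.
rewrite L R hE_cons0.
have hm := hE_mono o w.
have z : forall k', (k' < hE o w 0)%R ->
   count (fun t => hE o w t == k') (iota 0 (size w).+1) = 0 /\
   count (fun c => (nth 0 w c == o) && (hE o w c == k')) (iota 0 (size w)) = 0.
  move=> k' hk'; split.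
    rewrite (eq_count (a2 := pred0)) ?count_pred0 // => t /=.
    by apply/negbTE/eqP; have := hm t; lia.
  rewrite (eq_count (a2 := pred0)) ?count_pred0 // => t /=.
  by rewrite [hE o w t == k'](_ : _ = false) ?andbF //; apply/negbTE/eqP; have := hm t; lia.
move=> /andP[hk1 hk2].
have hk3 : (k <= hE o w (size w) + (o < x)%N%:Z)%R.
  by move: hk2; rewrite !hE_end /=; set c := count _ w; lia.
case: (ltngtP x o) => hxo; rewrite ?PF ?PT ?subr0.
- have [e|ne] := eqVneq k (hE o w 0 - 1)%R.
    have [z1 z2] := z k ltac:(lia). by rewrite z1 z2.
  by rewrite IH //; apply/andP; split; lia.
- have [e|ne] := eqVneq k (hE o w 0)%R.
    have [z1 z2] := z (k - 1)%R ltac:(lia). by rewrite z1 z2.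
  by rewrite IH //; apply/andP; split; lia.
- rewrite IH; last by apply/andP; split; lia.
  by case: (hE o w 0 == k).
Qed.

Definition gO (o : nat) (w : seq nat) (t : nat) : int :=
  let a := count (fun x => o <= x) (take t w) in
  let b := count (fun x => x <= o) (drop t w) in (a%:Z - b%:Z)%R.

Lemma gO_mono o w t : (gO o w 0 <= gO o w t)%R.
Proof.
rewrite /gO take0 drop0 /=.
have := count_take_drop (fun x => x <= o) w t.
set c1 := count _ w. set c2 := count _ (take _ _). set c3 := count _ (drop _ _). set c4 := count _ (take _ _). lia.
Qed.

Lemma gO_cons0 o x w : gO o (x :: w) 0 = (gO o w 0 - (x <= o)%N%:Z)%R.
Proof. rewrite /gO /= ?take0 ?drop0 /=. set c := count _ w. lia. Qed.

Lemma gO_consS o x w t : gO o (x :: w) t.+1 = (gO o w t + (o <= x)%N%:Z)%R.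
Proof. rewrite /gO /=. set c1 := count _ (take _ _). set c2 := count _ (drop _ _). lia. Qed.

Lemma gO_end o w : gO o w (size w) = Posz (count (fun x => o <= x) w).
Proof. rewrite /gO take_size drop_size /=. set c := count _ _. lia. Qed.

Lemma odd_walk o w (k : int) : (gO o w 0 <= k <= gO o w (size w))%R ->
  count (fun t => gO o w t == k) (iota 0 (size w).+1) +
  count (fun c => (nth 0 w c == o) && (gO o w c == k - 1)%R) (iota 0 (size w)) = 1.
Proof.
elim: w k => [|x w IH] k.
  rewrite /gO /= => /andP[h1 h2]. have -> : k = 0%R by lia. by [].
have L : count (fun t => gO o (x :: w) t == k) (iota 0 (size (x :: w)).+1) =
    (gO o (x :: w) 0 == k) + count (fun t => gO o w t == (k - (o <= x)%N%:Z)%R) (iota 0 (size w).+1).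
  rewrite count_iotaS; congr (_ + _); apply: eq_count => t /=.
  by rewrite gO_consS; apply/eqP/eqP; lia.
have R : count (fun c => (nth 0 (x :: w) c == o) && (gO o (x :: w) c == k - 1)%R) (iota 0 (size (x :: w))) =
    (x == o) && (gO o (x :: w) 0 == k - 1)%R +
    count (fun c => (nth 0 w c == o) && (gO o w c == (k - (o <= x)%N%:Z) - 1)%R) (iota 0 (size w)).
  rewrite count_iotaS; congr (_ + _); apply: eq_count => t /=.
  by rewrite gO_consS; congr (_ && _); apply/eqP/eqP; lia.
rewrite L R gO_cons0.
have hm := gO_mono o w.
have z : forall k', (k' < gO o w 0)%R ->
   count (fun t => gO o w t == k') (iota 0 (size w).+1) = 0 /\
   count (fun c => (nth 0 w c == o) && (gO o w c == k')) (iota 0 (size w)) = 0.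
  move=> k' hk'; split.
    rewrite (eq_count (a2 := pred0)) ?count_pred0 // => t /=.
    by apply/negbTE/eqP; have := hm t; lia.
  rewrite (eq_count (a2 := pred0)) ?count_pred0 // => t /=.
  by rewrite [gO o w t == k'](_ : _ = false) ?andbF //; apply/negbTE/eqP; have := hm t; lia.
move=> /andP[hk1 hk2].
have hk3 : (k <= gO o w (size w) + (o <= x)%N%:Z)%R.
  by move: hk2; rewrite !gO_end /=; set c := count _ w; lia.
case: (ltngtP x o) => hxo.
- rewrite ?PF ?PT ?subr0 ?andFb ?andTb ?add0n.
  have [e|ne] := eqVneq k (gO o w 0 - 1)%R.
    have [z1 z2] := z k ltac:(lia). have [z3 z4] := z (k - 1)%R ltac:(lia). by rewrite z1 z4.
  by rewrite -(IH k) //; apply/andP; split; lia.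
- rewrite ?PF ?PT ?subr0 ?andFb ?andTb ?add0n.
  have [e|ne] := eqVneq k (gO o w 0)%R.
    have [z1 z2] := z (k - 1)%R ltac:(lia). have [z3 z4] := z (k - 1 - 1)%R ltac:(lia). by rewrite z1 z4.
  by rewrite -(IH (k - 1)%R) //; apply/andP; split; lia.
- rewrite ?PF ?PT ?subr0 ?andFb ?andTb ?add0n.
  have [e|ne] := eqVneq k (gO o w 0 - 1)%R.
    have [z1 z2] := z (k - 1)%R ltac:(lia). have [z3 z4] := z (k - 1 - 1)%R ltac:(lia).
    rewrite z1 z4.
    have [E1|E1] := eqVneq (gO o w 0 - 1)%R k; have [E2|E2] := eqVneq (gO o w 0 - 1)%R (k - 1)%R; by try lia.
  have [e'|ne'] := eqVneq k (gO o w 0)%R.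
    have [z1 z2] := z (k - 1)%R ltac:(lia). have [z3 z4] := z (k - 1 - 1)%R ltac:(lia).
    rewrite z1 z4.
    have [E1|E1] := eqVneq (gO o w 0 - 1)%R k; have [E2|E2] := eqVneq (gO o w 0 - 1)%R (k - 1)%R; by try lia.
  rewrite -(IH (k - 1)%R); last by apply/andP; split; lia.
  have [E1|E1] := eqVneq (gO o w 0 - 1)%R k; have [E2|E2] := eqVneq (gO o w 0 - 1)%R (k - 1)%R; try lia.
  by [].
Qed.
Fixpoint words (q n : nat) : seq (seq nat) :=
  if n is n'.+1 then [seq x :: w | x <- iota 0 q, w <- words q n'] else [:: [::]].

Lemma wordsS q n : words q n.+1 = [seq x :: w | x <- iota 0 q, w <- words q n].
Proof. by []. Qed.

Definition ins (c e : nat) (w : seq nat) := take c w ++ e :: drop c w.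

Lemma size_words q n w : w \in words q n -> size w = n.
Proof.
elim: n w => [|n IH] w /=; first by rewrite inE => /eqP->.
by case/allpairsP => [[x w'] /= [_ hw ->]] /=; rewrite (IH _ hw).
Qed.

Lemma words_all q n w : w \in words q n -> all (fun x => x < q) w.
Proof.
elim: n w => [|n IH] w /=; first by rewrite inE => /eqP->.
case/allpairsP => [[x w'] /= [hx hw ->]] /=; rewrite (IH _ hw) andbT.
by move: hx; rewrite mem_iota.
Qed.

Lemma size_wordsS q n : size (words q n) = q ^ n.
Proof. by elim: n => [|n IH] //=; rewrite size_allpairs size_iota IH expnS. Qed.

Lemma count_sum (T : Type) (a : pred T) (r : seq T) : count a r = \sum_(j <- r) a j.
Proof. by elim: r => [|x r IH]; rewrite ?big_nil ?big_cons //= IH. Qed.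

Lemma sum_iota_eq q e (he : e < q) (G : nat -> nat) :
  \sum_(x <- iota 0 q) (x == e) * G x = G e.
Proof.
rewrite (bigD1_seq e) ?mem_iota ?iota_uniq //= eqxx mul1n big1 ?addn0 //.
by move=> x hx; rewrite (negbTE hx).
Qed.

Lemma sum_ins q e (he : e < q) c : forall n (F : seq nat -> nat), c <= n ->
  \sum_(w <- words q n.+1) (nth 0 w c == e) * F w = \sum_(w <- words q n) F (ins c e w).
Proof.
elim: c => [|c IH] n F hc.
  rewrite /= big_allpairs_dep /=.
  rewrite (eq_bigr (fun x => (x == e) * \sum_(w <- words q n) F (x :: w))).
    by rewrite sum_iota_eq //; apply: eq_bigr => w _; rewrite /ins take0 drop0.
  by move=> x _; rewrite big_distrr.
case: n hc => [//|n] hc.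
rewrite (wordsS q n.+1) (wordsS q n) !big_allpairs_dep /=.
by apply: eq_bigr => x _; rewrite IH.
Qed.

Definition fixE o w := count (fun c => (nth 0 w c == o) && (hE o w c == 0%R)) (iota 0 (size w)).
Definition fixO o w := count (fun c => (nth 0 w c == o) && (gO o w c == (-1)%R)) (iota 0 (size w)).

Lemma take_ins c e w : c <= size w -> take c (ins c e w) = take c w.
Proof.
move=> hc; rewrite /ins take_cat size_take.
by rewrite (_ : (if c < size w then c else size w) = c) ?ltnn ?subnn ?take0 ?cats0 //; case: ltnP => //; lia.
Qed.

Lemma drop_ins c e w : c <= size w -> drop c (ins c e w) = e :: drop c w.
Proof.
move=> hc; rewrite /ins drop_cat size_take.
by rewrite (_ : (if c < size w then c else size w) = c) ?ltnn ?subnn ?drop0 //; case: ltnP => //; lia.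
Qed.

Lemma hE_ins o c w : c <= size w -> hE o (ins c o w) c = hE o w c.
Proof. by move=> hc; rewrite /hE take_ins // drop_ins //= ltnn. Qed.

Lemma gO_ins o c w : c <= size w -> gO o (ins c o w) c = (gO o w c - 1)%R.
Proof.
move=> hc; rewrite /gO take_ins // drop_ins //= leqnn.
set c1 := count _ (take _ _). set c2 := count _ (drop _ _). lia.
Qed.

Lemma Se_rec q o n (ho : o < q) :
  \sum_(w <- words q n.+1) fixE o w = q ^ n + \sum_(w <- words q n) fixE o w.
Proof.
rewrite (eq_big_seq (fun w => \sum_(c <- iota 0 n.+1) (nth 0 w c == o) * (hE o w c == 0%R))); last first.
  move=> w hw; rewrite /fixE (size_words _ _ _ hw) count_sum; apply: eq_bigr => c _; by rewrite mulnb.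
rewrite exchange_big.
rewrite (eq_big_seq (fun c => \sum_(w <- words q n) (hE o w c == 0%R))) ; last first.
  move=> c hc; have {}hc : c < n.+1 by move: hc; rewrite mem_iota; lia.
  rewrite sum_ins //.
  by apply: eq_big_seq => w hw; rewrite hE_ins // (size_words _ _ _ hw); lia.
rewrite exchange_big.
rewrite (eq_big_seq (fun w => 1 + fixE o w)).
  by rewrite big_split /= sum1_size size_wordsS.
move=> w hw; rewrite -count_sum -(size_words _ _ _ hw) /fixE; apply: even_walk.
rewrite hE_end /hE take0 drop0 /=; set c := count _ w; set c2 := count _ w; lia.
Qed.

Lemma So_rec q o n (ho : o < q) :
  \sum_(w <- words q n.+1) fixO o w + \sum_(w <- words q n) fixO o w = q ^ n.
Proof.
rewrite (eq_big_seq (fun w => \sum_(c <- iota 0 n.+1) (nth 0 w c == o) * (gO o w c == (-1)%R))); last first.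
  move=> w hw; rewrite /fixO (size_words _ _ _ hw) count_sum; apply: eq_bigr => c _; by rewrite mulnb.
rewrite exchange_big.
rewrite (eq_big_seq (fun c => \sum_(w <- words q n) (gO o w c == 0%R))) ; last first.
  move=> c hc; have {}hc : c < n.+1 by move: hc; rewrite mem_iota; lia. rewrite sum_ins //.
  apply: eq_big_seq => w hw; rewrite gO_ins //; last by rewrite (size_words _ _ _ hw); lia.
  by congr (nat_of_bool _); apply/eqP/eqP; lia.
rewrite exchange_big -big_split /= -size_wordsS -sum1_size.
apply: eq_big_seq => w hw; rewrite -count_sum -(size_words _ _ _ hw) /fixO.
have h := odd_walk o w 0%R; rewrite sub0r in h; apply: h.
rewrite gO_end /gO take0 drop0 /=; set c := count _ w; set c2 := count _ w; lia.
Qed.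

Definition Ef q n := \sum_(j < n) q ^ j.
Fixpoint Of q n := if n is n'.+1 then q ^ n' - Of q n' else 0.

Lemma sumE q o n (ho : o < q) : \sum_(w <- words q n) fixE o w = Ef q n.
Proof.
elim: n => [|n IH]; first by rewrite /= big_seq1 /Ef big_ord0.
by rewrite Se_rec // IH /Ef big_ord_recr /= addnC.
Qed.

Lemma sumO q o n (ho : o < q) : \sum_(w <- words q n) fixO o w = Of q n.
Proof.
elim: n => [|n IH]; first by rewrite /= big_seq1.
have := So_rec q o n ho. rewrite IH /=. lia.
Qed.

Definition fixw (w : seq nat) : nat :=
  count (fun c => if odd (nth 0 w c) then gO (nth 0 w c) w c == (-1)%R
                  else hE (nth 0 w c) w c == 0%R) (iota 0 (size w)).

Lemma fixw_split q w : all (fun x => x < q) w ->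
  fixw w = \sum_(o <- iota 0 q) (if odd o then fixO o w else fixE o w).
Proof.
move=> hall.
rewrite /fixw count_sum.
rewrite (eq_big_seq (fun c => \sum_(o <- iota 0 q) (o == nth 0 w c) *
    (if odd o then gO o w c == (-1)%R else hE o w c == 0%R))); last first.
  move=> c hc; rewrite sum_iota_eq //.
  have : c < size w by move: hc; rewrite mem_iota.
  by move=> hcs; move/allP: hall; apply; rewrite mem_nth.
rewrite exchange_big; apply: eq_bigr => o _.
rewrite /fixO /fixE !count_sum; case: (odd o); apply: eq_bigr => c _;
  by rewrite eq_sym mulnb.
Qed.

Lemma sum_fixw q n : \sum_(w <- words q n) fixw w =
  \sum_(o <- iota 0 q) (if odd o then Of q n else Ef q n).
Proof.
rewrite (eq_big_seq (fun w => \sum_(o <- iota 0 q) (if odd o then fixO o w else fixE o w))); last first.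
  by move=> w hw; apply: fixw_split; apply: (words_all q n).
rewrite exchange_big; apply: eq_big_seq => o; rewrite mem_iota => /andP[_ ho].
by case: (odd o); [apply: sumO | apply: sumE].
Qed.

Lemma sum_parity m (A B : nat) :
  \sum_(o <- iota 0 (2 * m + 1)) (if odd o then A else B) = m * A + (m + 1) * B.
Proof.
elim: m => [|m IH]; first by rewrite /= big_seq1 /=; lia.
rewrite (_ : 2 * m.+1 + 1 = (2 * m + 1) + 2); last by lia.
rewrite (iotaD 0 (2 * m + 1) 2) big_cat IH /= big_cons big_seq1 /=.
rewrite ?add0n ?oddS oddD oddM /=. lia.
Qed.

Definition shw (w : seq nat) t := (nth 0 w t).+1./2.
Arguments shw : simpl never.
Definition topP w s t := (shw w t == s) && odd (nth 0 w t).
Definition botP w s t := (shw w t == s) && ~~ odd (nth 0 w t).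
Definition blk w s := rev (filter (topP w s) (iota 0 (size w))) ++ filter (botP w s) (iota 0 (size w)).
Definition natdeck m w := flatten [seq blk w s | s <- iota 0 m.+1].

Lemma foldl_piles n k (ch : {ffun 'I_n -> 'I_k}) (l : seq 'I_n) s :
  (foldl (fun p (i : 'I_n) => place (ch i) i p) (fun _ => [::]) l) s =
  rev [seq i <- l | (shelf_of (ch i) == s) && on_top (ch i)] ++
  [seq i <- l | (shelf_of (ch i) == s) && ~~ on_top (ch i)].
Proof.
elim/last_ind: l s => [|l x IH] s //.
rewrite foldl_rcons /place IH !filter_rcons.
case: eqP => [<-|ne]; case: (on_top (ch x)) => //=.
  by rewrite eqxx /= rev_rcons.
  by rewrite eqxx /= rcons_cat.
all: by rewrite (_ : (shelf_of (ch x) == s) = false) //; apply/eqP => e; apply: ne.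
Qed.

Definition wch {n m} (ch : {ffun 'I_n -> 'I_(2 * m + 1)}) : seq nat := [seq val (ch i) | i <- enum 'I_n].

Lemma nth_wch {n m} (ch : {ffun 'I_n -> 'I_(2 * m + 1)}) (i : 'I_n) : nth 0 (wch ch) i = ch i.
Proof. by rewrite /wch (nth_map i) ?nth_ord_enum // size_enum_ord. Qed.

Lemma size_wch {n m} (ch : {ffun 'I_n -> 'I_(2 * m + 1)}) : size (wch ch) = n.
Proof. by rewrite size_map size_enum_ord. Qed.

Lemma map_filter_ord n (P : pred nat) :
  map val [seq i <- enum 'I_n | P (val i)] = [seq t <- iota 0 n | P t].
Proof. by rewrite -val_enum_ord filter_map. Qed.

Lemma deck_nat n m (ch : {ffun 'I_n -> 'I_(2 * m + 1)}) :
  map val (shelf_deck ch) = natdeck m (wch ch).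
Proof.
rewrite /shelf_deck /natdeck map_flatten -map_comp; congr flatten; apply: eq_map => s /=.
rewrite foldl_piles map_cat map_rev /blk size_wch.
congr (rev _ ++ _); rewrite -map_filter_ord; congr map; apply: eq_filter => i;
  by rewrite /topP /botP /shw nth_wch.
Qed.

Lemma mem_blk w s t : (t \in blk w s) = (t < size w) && (shw w t == s).
Proof.
rewrite mem_cat mem_rev !mem_filter mem_iota /topP /botP add0n.
by case: (odd _); case: (shw w t == s); case: (t < size w).
Qed.

Lemma shw_le m w t : all (fun x => x < 2 * m + 1) w -> t < size w -> shw w t < m.+1.
Proof.
move=> /allP hall ht; have := hall _ (mem_nth 0 ht).
rewrite /shw -divn2; set x := nth 0 w t; lia.
Qed.

Lemma count_split2 (T : Type) (a p : pred T) s :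
  count (fun x => a x && p x) s + count (fun x => a x && ~~ p x) s = count a s.
Proof. by elim: s => //= x s IH; rewrite -IH; case: (a x); case: (p x) => /=; lia. Qed.

Lemma count_blk w s (a : pred nat) :
  count a (blk w s) = count (fun t => a t && (shw w t == s)) (iota 0 (size w)).
Proof.
rewrite count_cat count_rev !count_filter.
rewrite -(count_split2 _ (fun t => a t && (shw w t == s)) (fun t => odd (nth 0 w t))).
congr (_ + _); apply: eq_count => t /=; rewrite /topP /botP; 
  by case: (a t); case: (shw w t == s).
Qed.

Lemma perm_natdeck m w : all (fun x => x < 2 * m + 1) w ->
  perm_eq (natdeck m w) (iota 0 (size w)).
Proof.
move=> hall; apply/seq.permP => a.
rewrite /natdeck count_flatten -map_comp sumnE big_map.
rewrite (eq_bigr (fun s => \sum_(t <- iota 0 (size w)) (s == shw w t) * a t)); last first.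
  move=> s _ /=; rewrite count_blk count_sum; apply: eq_bigr => t _.
  by rewrite eq_sym mulnC mulnb.
rewrite exchange_big count_sum; apply: eq_big_seq => t ht.
have ht' : t < size w by move: ht; rewrite mem_iota.
by rewrite (@sum_iota_eq m.+1 (shw w t) (shw_le _ _ _ hall ht')).
Qed.

Lemma eqv_odd o x : odd o -> ((x.+1./2 < o.+1./2) = (x < o)) /\ (((x.+1./2 == o.+1./2) && odd x) = (x == o)).
Proof.
move=> ho; rewrite -!divn2; have := modn2 x; have := modn2 o; rewrite ho.
case: (odd x) => /= h1 h2; split; apply/idP/idP; lia.
Qed.

Lemma eqv_even o x : ~~ odd o -> (((x.+1./2 < o.+1./2) || ((x.+1./2 == o.+1./2) && odd x)) = (x < o)) /\ (((x.+1./2 == o.+1./2) && ~~ odd x) = (x == o)).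
Proof.
move=> ho; rewrite -!divn2; have := modn2 x; have := modn2 o; rewrite (negbTE ho).
case: (odd x) => /= h1 h2; split; apply/idP/idP; rewrite ?orbF ?andbT ?andbF; lia.
Qed.

Lemma size_blk w s : size (blk w s) = count (fun t => shw w t == s) (iota 0 (size w)).
Proof. by rewrite -count_predT count_blk. Qed.

Lemma index_flatten_blk w c : c < size w -> forall k a, a <= shw w c < a + k ->
  index c (flatten [seq blk w s | s <- iota a k]) =
  count (fun t => (a <= shw w t) && (shw w t < shw w c)) (iota 0 (size w)) + index c (blk w (shw w c)).
Proof.
move=> hc; elim=> [|k IH] a hk; first by lia.
rewrite /= index_cat mem_blk hc /=.
case: eqP => [e|ne].
  rewrite -e (eq_count (a2 := pred0)) ?count_pred0 //= => t /=; lia.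
rewrite IH; last by lia.
rewrite addnA size_blk; congr (_ + _).
rewrite !count_sum -big_split /=; apply: eq_bigr => t _; lia.
Qed.

Lemma index_rev_uniq (T : eqType) (s : seq T) x : uniq s -> x \in s ->
  index x (rev s) = size s - (index x s).+1.
Proof.
move=> us xs.
have hi : index x s < size s by rewrite index_mem.
have hj : size s - (index x s).+1 < size (rev s) by rewrite size_rev; lia.
rewrite -{1}(nth_index x xs).
have -> : nth x s (index x s) = nth x (rev s) (size s - (index x s).+1).
  by rewrite nth_rev ?size_rev; [congr nth; lia | lia].
by rewrite index_uniq // rev_uniq.
Qed.

Lemma index_filter_take (T : eqType) (p : pred T) (s : seq T) x : p x ->
  index x (filter p s) = count p (take (index x s) s).
Proof.
move=> px; elim: s => //= y s IH.
case: (eqVneq y x) => [->|ne]; first by rewrite px /= eqxx.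
have ne2 : (x == y) = false by rewrite eq_sym (negbTE ne).
by case py: (p y) => /=; rewrite ?(negbTE ne) ?ne2 /= ?py IH.
Qed.

Lemma index_iota0 n c : c < n -> index c (iota 0 n) = c.
Proof.
move=> hc; have := @index_uniq _ 0 c (iota 0 n).
by rewrite size_iota nth_iota // add0n iota_uniq; apply.
Qed.

Lemma count_iota_take (P : pred nat) w c : c <= size w ->
  count (fun t => P (nth 0 w t)) (iota 0 c) = count P (take c w).
Proof. by move=> hc; rewrite -(map_nth_iota0 0 hc) count_map. Qed.

Lemma count_iota_all (P : pred nat) w :
  count (fun t => P (nth 0 w t)) (iota 0 (size w)) = count P w.
Proof. by rewrite count_iota_take // take_size. Qed.

Definition pos (w : seq nat) (c : nat) : nat :=
  let o := nth 0 w c in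
  count (fun x => x < o) w +
  (if odd o then count (pred1 o) (drop c.+1 w) else count (pred1 o) (take c w)).

Lemma count_mid (P : pred nat) w c : c < size w ->
  count P w = count P (take c w) + P (nth 0 w c) + count P (drop c.+1 w).
Proof.
move=> hc; rewrite -{1}(cat_take_drop c w) count_cat (drop_nth 0 hc) /=; lia.
Qed.

Lemma index_natdeck m w c : all (fun x => x < 2 * m + 1) w -> c < size w ->
  index c (natdeck m w) = pos w c.
Proof.
move=> hall hc.
rewrite /natdeck index_flatten_blk //; last by have := shw_le _ _ _ hall hc; lia.
rewrite /pos /blk index_cat mem_rev mem_filter /topP eqxx mem_iota hc /=.
set o := nth 0 w c.
case: (boolP (odd o)) => ho.
- have E := fun x => eqv_odd o x ho.
  rewrite index_rev_uniq ?filter_uniq ?iota_uniq; last by rewrite mem_filter /topP eqxx ho mem_iota hc.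
  rewrite size_filter index_filter_take /topP ?eqxx ?ho // index_iota0 // take_iota.
  rewrite (_ : minn c (size w) = c); last by lia.
  rewrite (eq_count (a2 := fun t => nth 0 w t < o)); last by move=> t; rewrite /shw (proj1 (E _)).
  rewrite (eq_count (a1 := fun t => (shw w t == shw w c) && odd (nth 0 w t)) (a2 := fun t => pred1 o (nth 0 w t)));
    last by move=> t; rewrite /shw (proj2 (E _)).
  rewrite (eq_count (a1 := fun t => (shw w t == shw w c) && odd (nth 0 w t)) (a2 := fun t => pred1 o (nth 0 w t)));
    last by move=> t; rewrite /shw (proj2 (E _)).
  rewrite !count_iota_all count_iota_take ?(ltnW hc) //.
  rewrite (count_mid (pred1 o) w c hc) /= eqxx /=.
  rewrite (count_iota_all (fun x => x < o)).
  set a1 := count_mem o (take c w); set a2 := count_mem o (drop c.+1 w); set a3 := count _ w; lia.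
  1,2: by [].
- have E := fun x => eqv_even o x ho.
  rewrite /= size_rev size_filter index_filter_take; last by rewrite /botP eqxx ho.
  rewrite index_iota0 // take_iota (_ : minn c (size w) = c); last by lia.
  rewrite addnA.
  have -> : count (fun t => shw w t < shw w c) (iota 0 (size w)) + count (topP w (shw w c)) (iota 0 (size w))
      = count (fun t => (fun x => x < o) (nth 0 w t)) (iota 0 (size w)).
    rewrite !count_sum -big_split; apply: eq_bigr => t _ /=; rewrite /topP /shw -(proj1 (E _)).
    by case: (ltngtP (nth 0 w t).+1./2 o.+1./2).
  rewrite (count_iota_all (fun x => x < o)).
  rewrite (eq_count (a1 := botP w (shw w c)) (a2 := fun t => pred1 o (nth 0 w t))); last first.
    by move=> t; rewrite /botP /shw (proj2 (E _)).
  by rewrite count_iota_take // ltnW.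
Qed.

Lemma count3 o s : count (fun x => x < o) s + count (pred1 o) s + count (fun x => o < x) s = size s.
Proof. elim: s => //= x s IH; rewrite -IH; case: (ltngtP x o) => h /=; lia. Qed.

Lemma count_geq o s : count (fun x => o <= x) s = count (pred1 o) s + count (fun x => o < x) s.
Proof. elim: s => //= x s IH; rewrite IH; case: (ltngtP x o) => h /=; lia. Qed.

Lemma count_leq o s : count (fun x => x <= o) s = count (fun x => x < o) s + count (pred1 o) s.
Proof. elim: s => //= x s IH; rewrite IH; case: (ltngtP x o) => h /=; lia. Qed.

Lemma fixed_iff w c : c < size w ->
  (pos w c == c) = (if odd (nth 0 w c) then gO (nth 0 w c) w c == (-1)%R
                    else hE (nth 0 w c) w c == 0%R).
Proof.
move=> hc; rewrite /pos /gO /hE; set o := nth 0 w c.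
have h3 := count3 o (take c w); rewrite size_take hc in h3.
have hd := count_take_drop (fun x => x < o) w c.
have hdr : drop c w = o :: drop c.+1 w by rewrite (drop_nth 0 hc).
rewrite count_geq count_leq hdr /= ltnn eqxx /=.
move: h3 hd; rewrite hdr /= ltnn /=.
set a1 := count (fun x => x < o) (take c w).
set a2 := count (pred1 o) (take c w).
set a3 := count (fun x => o < x) (take c w).
set d1 := count (fun x => x < o) (drop c.+1 w).
set d2 := count (pred1 o) (drop c.+1 w).
set tt := count (fun x => x < o) w.
move=> h3 hd.
case: (odd o); apply/eqP/eqP; lia.
Qed.

Lemma card_set_sum (T : finType) (P : pred T) : #|[set x | P x]| = \sum_(x : T) P x.
Proof. by rewrite -sum1dep_card big_mkcond /=; apply: eq_bigr => i _; case: (P i). Qed.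

Lemma mem_words q n w : (w \in words q n) = (size w == n) && all (fun x => x < q) w.
Proof.
elim: n w => [|n IH] w /=.
  by rewrite inE; case: w.
apply/idP/idP.
  case/allpairsP => [[x w'] /= [hx hw ->]] /=.
  move: hx hw; rewrite mem_iota IH add0n => /andP[_ ->] /andP[/eqP-> ->].
  by rewrite eqxx.
case: w => //= x w /andP[hs /andP[hx ha]].
rewrite eqSS in hs.
by apply/allpairsP; exists (x, w) => /=; rewrite mem_iota IH hs ha hx.
Qed.

Lemma words_uniq q n : uniq (words q n).
Proof.
elim: n => //= n IH; apply: allpairs_uniq => //; first exact: iota_uniq.
by move=> [x1 w1] [x2 w2] _ _ /= [-> ->].
Qed.

Lemma wch_inj n m : injective (@wch n m).
Proof.
move=> ch1 ch2 e; apply/ffunP => i; apply: ord_inj.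
by have := congr1 (fun w => nth 0 w i) e; rewrite !nth_wch.
Qed.

Lemma wch_all n m (ch : {ffun 'I_n -> 'I_(2 * m + 1)}) : all (fun x => x < 2 * m + 1) (wch ch).
Proof. apply/allP => x; rewrite /wch => /mapP [i _ ->]; exact: ltn_ord. Qed.

Lemma bridge n m (G : seq nat -> nat) :
  \sum_(ch : {ffun 'I_n -> 'I_(2 * m + 1)}) G (wch ch) = \sum_(w <- words (2 * m + 1) n) G w.
Proof.
rewrite -(big_map (@wch n m) xpredT G).
apply: perm_big; apply: uniq_perm.
- by rewrite map_inj_uniq ?index_enum_uniq //; apply: wch_inj.
- exact: words_uniq.
move=> w; rewrite mem_words; apply/mapP/idP.
  by move=> [ch _ ->]; rewrite size_wch eqxx wch_all.
move=> /andP[/eqP hs ha].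
have hq : 0 < 2 * m + 1 by rewrite addn1.
pose d : 'I_(2 * m + 1) := Ordinal hq.
exists [ffun i : 'I_n => insubd d (nth 0 w i)]; first exact: mem_index_enum.
apply: (@eq_from_nth _ 0); first by rewrite size_wch hs.
move=> k; rewrite hs => hk.
rewrite -[k]/(val (Ordinal hk)) nth_wch ffunE val_insubd.
by move/allP: ha => ->; rewrite // mem_nth // hs.
Qed.

Lemma deck_perm {n m} (ch : {ffun 'I_n -> 'I_(2 * m + 1)}) :
  perm_eq (map val (shelf_deck ch)) (iota 0 n).
Proof. by rewrite deck_nat -{2}(size_wch ch); apply: perm_natdeck; apply: wch_all. Qed.

Lemma deck_uniq {n m} (ch : {ffun 'I_n -> 'I_(2 * m + 1)}) : uniq (shelf_deck ch).
Proof. by rewrite -(map_inj_uniq val_inj) (perm_uniq (deck_perm ch)) iota_uniq. Qed.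

Lemma deck_size {n m} (ch : {ffun 'I_n -> 'I_(2 * m + 1)}) : size (shelf_deck ch) = n.
Proof. by rewrite -(size_map val) (perm_size (deck_perm ch)) size_iota. Qed.

Lemma exists_pi n (x0 : 'I_n) (d : seq 'I_n) : uniq d -> size d = n ->
  sig (fun pi : 'S_n => [seq pi i | i <- enum 'I_n] = d).
Proof.
move=> ud hs.
have finj : injective (fun i : 'I_n => nth x0 d i).
  move=> i j /eqP; rewrite nth_uniq ?hs // => /eqP; apply: val_inj.
exists (perm finj).
apply: (@eq_from_nth _ x0); first by rewrite size_map size_enum_ord hs.
move=> k; rewrite size_map size_enum_ord => hk.
by rewrite (nth_map x0) ?size_enum_ord // permE nth_enum_ord.
Qed.

Lemma seq_pi_inj n (pi1 pi2 : 'S_n) :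
  [seq pi1 i | i <- enum 'I_n] = [seq pi2 i | i <- enum 'I_n] -> pi1 = pi2.
Proof.
move=> e; apply/permP => i.
by move/eq_in_map: e; apply; rewrite mem_enum.
Qed.

Lemma nth_index_perm (vd : seq nat) n i : perm_eq vd (iota 0 n) -> i < n ->
  (nth 0 vd i == i) = (index i vd == i).
Proof.
move=> hp hi.
have ud : uniq vd by rewrite (perm_uniq hp) iota_uniq.
have sz : size vd = n by rewrite (perm_size hp) size_iota.
have iv : i \in vd by rewrite (perm_mem hp) mem_iota.
apply/eqP/eqP => e.
  by rewrite -{1}e index_uniq // sz.
by rewrite -{1}e nth_index.
Qed.

Lemma sum_ord_iota n (P : pred nat) : \sum_(i : 'I_n) P (val i) = count P (iota 0 n).
Proof.
rewrite count_sum (_ : iota 0 n = index_iota 0 n); last by rewrite /index_iota subn0.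
by rewrite big_mkord.
Qed.

Lemma fix_pi n m (ch : {ffun 'I_n -> 'I_(2 * m + 1)}) (pi : 'S_n) :
  [seq pi i | i <- enum 'I_n] = shelf_deck ch -> num_fixed_points pi = fixw (wch ch).
Proof.
move=> e.
rewrite /num_fixed_points card_set_sum.
rewrite (eq_bigr (fun i => nat_of_bool (index (val i) (map val (shelf_deck ch)) == val i))); last first.
  move=> i _ /=.
  have -> : (pi i == i) = (nth 0 (map val (shelf_deck ch)) i == i).
    rewrite -e -map_comp (nth_map i) ?size_enum_ord ?ltn_ord // nth_ord_enum.
    by [].
  by rewrite (nth_index_perm _ _ _ (deck_perm ch) (ltn_ord i)).
rewrite (sum_ord_iota n (fun t => index t (map val (shelf_deck ch)) == t)) /fixw size_wch; apply: eq_in_count => c; rewrite mem_iota => /andP[_ hc].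
rewrite deck_nat index_natdeck ?wch_all ?size_wch // fixed_iff // size_wch.
by rewrite add0n in hc.
Qed.

Lemma main_count n m (x0 : 'I_n) :
  \sum_(pi : 'S_n) #|[set ch : {ffun 'I_n -> 'I_(2 * m + 1)} |
       shelf_deck ch == [seq pi i | i <- enum 'I_n]]| * num_fixed_points pi
  = \sum_(w <- words (2 * m + 1) n) fixw w.
Proof.
rewrite -bridge.
rewrite (eq_bigr (fun pi : 'S_n => \sum_(ch : {ffun 'I_n -> 'I_(2 * m + 1)})
   (shelf_deck ch == [seq pi i | i <- enum 'I_n]) * num_fixed_points pi)); last first.
  by move=> pi _; rewrite card_set_sum big_distrl.
rewrite exchange_big; apply: eq_bigr => ch _.
case: (@exists_pi n x0 _ (deck_uniq ch) (deck_size ch)) => pi0 hpi0.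
rewrite (bigD1 pi0) //= -hpi0 eqxx mul1n big1 ?addn0; first exact: fix_pi.
move=> pi hpi; case: eqP => // e; case/eqP: hpi; exact: seq_pi_inj (esym e).
Qed.

Definition Tn m n := m * Of (2 * m + 1) n + (m + 1) * Ef (2 * m + 1) n.

Lemma Ef_S q n : Ef q n.+1 = q ^ n + Ef q n.
Proof. by rewrite /Ef big_ord_recr /= addnC. Qed.

Lemma Ef_eq m n : 2 * m * Ef (2 * m + 1) n + 1 = (2 * m + 1) ^ n.
Proof.
elim: n => [|n IH]; first by rewrite /Ef big_ord0 muln0 expn0.
rewrite Ef_S expnS mulnDr -addnA IH. set Q := (2 * m + 1) ^ n. nia.
Qed.

Lemma Of_le q n : 0 < q -> Of q n <= q ^ n.
Proof.
move=> hq; elim: n => [|n IH] //=.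
rewrite expnS; move: IH; set Q := q ^ n; set O := Of q n. nia.
Qed.

Lemma Of_eq m n : (2 * m + 2) * Of (2 * m + 1) n + ~~ odd n = (2 * m + 1) ^ n + odd n.
Proof.
elim: n => [|n IH]; first by rewrite /= muln0.
rewrite [Of _ n.+1]/= [odd n.+1]/=.
have hle := Of_le (2 * m + 1) n ltac:(lia).
rewrite expnS. move: IH hle. set Q := (2 * m + 1) ^ n. set O := Of _ n.
case: (odd n) => /=; nia.
Qed.

Lemma Trec m n : Tn m n.+1 = (2 * m + 1) * Tn m n + (if odd n then 1 else 2 * m + 1).
Proof.
rewrite /Tn /= Ef_S.
have h1 := Ef_eq m n. have h2 := Of_eq m n. have hle := Of_le (2 * m + 1) n ltac:(lia).
move: h1 h2 hle. set Q := (2 * m + 1) ^ n. set O := Of _ n. set E := Ef _ n.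
case: (odd n) => /=; nia.
Qed.

Local Open Scope ring_scope.

Definition G (m K : nat) : rat :=
  1 + 2 * \sum_(1 <= k < K.+1) (((2 * m + 1)%:R : rat) ^+ (2 * k))^-1.

Lemma Tn0 m : Tn m 0 = 0%N.
Proof. by rewrite /Tn /= /Ef big_ord0 !muln0. Qed.

Lemma qr_neq0 m : ((2 * m + 1)%:R : rat) != 0.
Proof. by rewrite pnatr_eq0 addn1. Qed.

Lemma T_closed m K :
  (Tn m (2 * K + 1))%:R = ((2 * m + 1)%:R : rat) ^+ (2 * K + 1) * G m K /\
  (Tn m (2 * K + 2))%:R = ((2 * m + 1)%:R : rat) ^+ (2 * K + 2) * G m K + 1.
Proof.
set q : rat := (2 * m + 1)%:R.
have q0 := qr_neq0 m.
have T1 : forall n, ((Tn m n.+1)%:R : rat) = q * (Tn m n)%:R + (if odd n then 1 else q).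
  by move=> n; rewrite Trec natrD natrM; case: (odd n).
elim: K => [|K [IH1 IH2]].
  have e1 : ((Tn m 1)%:R : rat) = q by rewrite T1 Tn0 /= mulr0 add0r.
  rewrite /G big_geq // mulr0 addr0 mulr1 e1 expr1; split => //.
  rewrite T1 /= e1; ring.
have GS : G m K.+1 = G m K + 2 * (q ^+ (2 * K + 2))^-1.
  rewrite /G big_nat_recr // -/q (_ : (2 * K.+1 = 2 * K + 2)%N); last by lia.
  by rewrite mulrDr addrA.
have e3 : ((Tn m (2 * K.+1 + 1))%:R : rat) = q ^+ (2 * K.+1 + 1) * G m K.+1.
  rewrite (_ : (2 * K.+1 + 1 = (2 * K + 2).+1)%N); last by lia.
  rewrite T1 IH2 (_ : odd (2 * K + 2) = false); last by rewrite oddD oddM.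
  rewrite GS; set N := (2 * K + 2)%N.
  have qN : q ^+ N != 0 by rewrite expf_neq0.
  rewrite exprS; field; exact: qN.
split => //.
rewrite (_ : (2 * K.+1 + 2 = (2 * K.+1 + 1).+1)%N); last by lia.
rewrite T1 e3 (_ : odd (2 * K.+1 + 1) = true); last by rewrite oddD oddM.
by rewrite exprS mulrA.
Qed.

Lemma key n m (hn : (0 < n)%N) :
  expected_fixed_points n m = (Tn m n)%:R / (((2 * m + 1) ^ n)%N)%:R.
Proof.
pose x0 : 'I_n := Ordinal hn.
rewrite /expected_fixed_points /lazy_shelf.
rewrite (eq_bigr (fun pi : 'S_n => ((#|[set ch : {ffun 'I_n -> 'I_(2 * m + 1)} |
       shelf_deck ch == [seq pi i | i <- enum 'I_n]]| * num_fixed_points pi)%N)%:R / (((2 * m + 1) ^ n)%N)%:R)); last first.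
  by move=> pi _; rewrite natrM mulrAC.
rewrite -mulr_suml -natr_sum (main_count n m x0) sum_fixw sum_parity.
by [].
Qed.

Theorem proposition5p2 (n m : nat) (hn : (0 < n)%N) (hm : (0 < m)%N) :
  expected_fixed_points n m =
  if odd n then
    1 + 2 * \sum_(1 <= k < (n.-1)./2.+1) (((2 * m + 1)%:R : rat) ^+ (2 * k))^-1
  else
    1 + 2 * \sum_(1 <= k < (n./2).-1.+1) (((2 * m + 1)%:R : rat) ^+ (2 * k))^-1
      + (((2 * m + 1)%:R : rat) ^+ n)^-1.
Proof.
rewrite key // natrX.
have q0 := qr_neq0 m.
case: (boolP (odd n)) => ho.
- have hK : n = (2 * n./2 + 1)%N by rewrite -divn2; have := modn2 n; rewrite ho; lia.
  have -> : (n.-1)./2 = n./2 by rewrite -!divn2; lia.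
  have [T1 _] := T_closed m n./2.
  rewrite -hK in T1; rewrite T1 -/(G m n./2) mulrC mulrA mulVf ?mul1r //.
  by rewrite expf_neq0.
- have hK : n = (2 * (n./2).-1 + 2)%N by rewrite -divn2; have := modn2 n; rewrite (negbTE ho); lia.
  have [_ T2] := T_closed m (n./2).-1.
  rewrite -hK in T2; rewrite T2 -/(G m (n./2).-1).
  have qN : ((2 * m + 1)%:R : rat) ^+ n != 0 by rewrite expf_neq0.
  by field.
Qed.
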